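(* Let $x,y$ be non-commuting indeterminates and $C=xyx^{-1}y^{-1}$. Let $(R_n)_{n\in\mathbb Z}$ be the solution of $$R_{n+1}CR_{n-1}=R_n^2+1\qquad(n\in\mathbb Z)$$ with $R_0=yxy^{-1}$ and $R_1=y$. Then the element $$K_n:=R_{n+1}^{-1}R_n+R_{n+1}^{-1}R_n^{-1}+R_{n+1}R_n^{-1}$$ is independent of $n\in\mathbb Z$.
   Context: Work in the free skew field (non-commutative rational functions) over $\mathbb C$ generated by $x,y$. *)

(* Defs.v *)
From HB Require Import structures.
From mathcomp Require Import all_boot all_order all_algebra.
From mathcomp Require Import complex.
From mathcomp Require Import Rstruct.
From Stdlib Require Import Reals.
Set Implicit Arguments. Unset Strict Implicit. Unset Printing Implicit Defensive.
Import Order.TTheory GRing.Theory Num.Theory.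
Local Open Scope ring_scope.

Definition CC : Type := complex Rdefinitions.R.
HB.instance Definition _ := GRing.Field.on CC.

Definition is_divring (D : unitRingType) : Prop :=
  forall d : D, d != 0 -> d \is a GRing.unit.

Inductive rexpr : Type :=
| RX | RY | RC of CC
| RAdd of rexpr & rexpr | RMul of rexpr & rexpr
| RNeg of rexpr | RInv of rexpr.

Fixpoint reval (D : unitAlgType CC) (a b : D) (e : rexpr) : option D :=
  match e with
  | RX => Some a
  | RY => Some b
  | RC c => Some (c%:A)
  | RAdd e1 e2 =>
      match reval a b e1, reval a b e2 with
      | Some u, Some v => Some (u + v) | _, _ => None end
  | RMul e1 e2 =>
      match reval a b e1, reval a b e2 with
      | Some u, Some v => Some (u * v) | _, _ => None end
  | RNeg e1 => match reval a b e1 with Some u => Some (- u) | None => None end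
  | RInv e1 =>
      match reval a b e1 with
      | Some u => if u \is a GRing.unit then Some u^-1 else None
      | None => None end
  end.

(* (K, x, y) is the free skew field over CC generated by x, y
   (Cohn's universal field of fractions of CC<x,y>), characterized by:
   - K is a division CC-algebra generated (as a division ring over CC) by x, y;
   - a rational expression is defined at (x, y) as soon as it is defined at
     some point of some division CC-algebra;
   - a rational expression vanishing at (x, y) vanishes at every point of
     every division CC-algebra where it is defined. *)
Definition free_skew_field (K : unitAlgType CC) (x y : K) : Prop :=
  [/\ is_divring K,
      forall k : K, exists e, reval x y e = Some k,
      forall e, (exists (D : unitAlgType CC) (a b : D),
                   is_divring D /\ reval a b e <> None) ->
                reval x y e <> None
    & forall e, reval x y e = Some 0 ->
      forall (D : unitAlgType CC) (a b : D), is_divring D ->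
      forall v, reval a b e = Some v -> v = 0].

Definition Kinv (K : unitRingType) (R : int -> K) (n : int) : K :=
  (R (n + 1))^-1 * R n + (R (n + 1))^-1 * (R n)^-1 + R (n + 1) * (R n)^-1.

(* Main.v *)
Require Import Defs.
From HB Require Import structures.
From mathcomp Require Import all_boot all_order all_algebra complex Rstruct.
Import GRing.Theory Num.Theory.
Local Open Scope ring_scope.

Lemma L_fwd (K : unitRingType) (a b c C : K) : a \is a GRing.unit -> b \is a GRing.unit ->
  C \is a GRing.unit -> c*C*a = b^+2+1 -> b*C*a = a*b -> c*C*b = b*c.
Proof.
move=> ua ub uC hr hJ.
have hc : c = (b^+2+1) * a^-1 * C^-1 by rewrite -hr mulrK // mulrK.
have hC : C = b^-1 * (a * b) * a^-1 by rewrite -hJ mulrA mulKr // mulrK.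
have hb : (b^+2+1) * b = b * (b^+2+1) by rewrite mulrDl mulrDr expr2 !mulrA mul1r mulr1.
have uab : a * b \is a GRing.unit by rewrite unitrMl.
have ubab : b^-1 * (a * b) \is a GRing.unit by rewrite unitrMl // unitrV.
have hCi : C^-1 = a * (b^-1 * (a^-1 * b)) . by rewrite hC invrM ?unitrV // invrK invrM ?unitrV // invrM // invrK !mulrA.
rewrite {1}hc divrK // hc hCi !mulrA divrK // -hb mulrK //.
Qed.

Lemma L_bwd (K : unitRingType) (a b c C : K) : b \is a GRing.unit -> c \is a GRing.unit ->
  C \is a GRing.unit -> c*C*a = b^+2+1 -> c*C*b = b*c -> b*C*a = a*b.
Proof.
move=> ub uc uC hr hJ.
have ha : a = C^-1 * c^-1 * (b^+2+1) by rewrite -hr !mulrA divrK // mulVr // mul1r.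
have hC : C = c^-1 * (b * c) * b^-1 by rewrite -hJ mulrA mulKr // mulrK.
have hb : (b^+2+1) * b = b * (b^+2+1) by rewrite mulrDl mulrDr expr2 !mulrA mul1r mulr1.
have ubc : b * c \is a GRing.unit by rewrite unitrMl.
have ucbc : c^-1 * (b * c) \is a GRing.unit by rewrite unitrMl // unitrV.
have hCi : C^-1 = b * (c^-1 * (b^-1 * c)).
  by rewrite hC invrM ?unitrV // invrK invrM ?unitrV // invrM // invrK !mulrA.
rewrite {1}ha !mulrA mulrK // ha hCi !mulrA mulrK // -[_ * _ * b]mulrA hb mulrA divrK //.
Qed.

Lemma L_K (K : unitRingType) (a b c C : K) : a \is a GRing.unit -> b \is a GRing.unit ->
  c \is a GRing.unit -> C \is a GRing.unit -> c*C*a = b^+2+1 -> b*C*a = a*b -> c*C*b = b*c ->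
  c^-1*b + c^-1*b^-1 + c*b^-1 = b^-1*a + b^-1*a^-1 + b*a^-1.
Proof.
move=> ua ub uc uC hr hJ hJ'.
have e1 : c^-1*b + c^-1*b^-1 = c^-1 * (b^+2+1) * b^-1.
  by rewrite mulrDr mulrDl expr2 mulr1 !mulrA mulrK.
have e2 : b^-1*a^-1 + b*a^-1 = b^-1 * (b^+2+1) * a^-1.
  by rewrite mulrDr mulrDl expr2 mulr1 mulKr // addrC.
have h1 : C * a = b^-1 * (a * b) by rewrite -hJ -!mulrA mulKr.
have h2 : C = c^-1 * (b * c) * b^-1 by rewrite -hJ' mulrA mulKr // mulrK.
rewrite e1 -addrA e2 -hr !mulrA mulVr // mul1r h1 mulrK // mulrA mulrK //.
congr (_ + _). by rewrite h2 !mulrA mulrK // mulVr // mul1r.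
Qed.

Section RevalLemmas.
Variables (D : unitAlgType CC) (a b : D).
Lemma rv_mul e1 e2 u v : reval a b e1 = Some u -> reval a b e2 = Some v ->
  reval a b (RMul e1 e2) = Some (u * v).
Proof. by move=> /= -> ->. Qed.
Lemma rv_add e1 e2 u v : reval a b e1 = Some u -> reval a b e2 = Some v ->
  reval a b (RAdd e1 e2) = Some (u + v).
Proof. by move=> /= -> ->. Qed.
Lemma rv_inv e1 u : reval a b e1 = Some u -> u \is a GRing.unit ->
  reval a b (RInv e1) = Some u^-1.
Proof. by move=> /= -> ->. Qed.
Lemma rv_one : reval a b (RC 1) = Some 1.
Proof. by rewrite /= scale1r. Qed.
End RevalLemmas.
Arguments rv_mul {D a b e1 e2 u v}.
Arguments rv_add {D a b e1 e2 u v}.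
Arguments rv_inv {D a b e1 u}.
Arguments rv_one {D a b}.

Lemma int_ind1 (Q : int -> Prop) : Q 0 -> (forall n, Q n -> Q (n+1)) ->
  (forall n, Q n -> Q (n-1)) -> forall n, Q n.
Proof.
move=> h0 hs hp; elim/int_ind => //.
- by move=> m hm; rewrite -[m.+1]addn1 PoszD; apply: hs.
- by move=> m hm; rewrite -[m.+1]addn1 PoszD opprD; exact: hp.
Qed.

Lemma int_ind2 (Q : int -> Prop) : Q 0 -> Q 1 -> (forall n, Q (n-1) -> Q n -> Q (n+1)) ->
  (forall n, Q n -> Q (n+1) -> Q (n-1)) -> forall n, Q n.
Proof.
move=> h0 h1 hf hb n.
suff: Q n /\ Q (n + 1) by case.
elim/int_ind1: n => [|n [q0 q1]|n [q0 q1]]; first by split.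
- by split => //; apply: (hf (n + 1)); rewrite ?addrK.
- by split; [apply: (hb n) | rewrite subrK].
Qed.

Definition CRR := complex Rdefinitions.R.

Lemma divD : is_divring (CC^o).
Proof. by move=> d hd; rewrite unitfE. Qed.

Definition cE := RMul (RMul (RMul RX RY) (RInv RX)) (RInv RY).
Arguments cE : simpl never.

Theorem lemma3p1 (K : unitAlgType CC) (x y : K) (Hfree : free_skew_field x y)
  (R : int -> K)
  (HR0 : R 0 = y * x * y^-1) (HR1 : R 1 = y)
  (Hrec : forall n : int,
      R (n + 1) * (x * y * x^-1 * y^-1) * R (n - 1) = R n ^+ 2 + 1) :
  forall n : int, Kinv R n = Kinv R 0.
Proof.
case: Hfree => Hdiv _ _ Hzero.
set C := x * y * x^-1 * y^-1 in Hrec.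
pose P (k : K) := exists e, reval x y e = Some k /\
   exists v : CC^o, reval (1 : CC^o) 1 e = Some v /\ 0 < (v : CRR).
have unitP : forall k, P k -> k \is a GRing.unit.
  move=> k [e [he [v [hv vpos]]]]; apply: Hdiv; apply/eqP => k0.
  move: he; rewrite k0 => he.
  have := Hzero e he _ 1 1 divD v hv => v0.
  by move: vpos; rewrite v0 Order.POrderTheory.ltxx.
have Px : P x by exists RX; split => //; exists 1; split => //; exact: ltr01.
have Py : P y by exists RY; split => //; exists 1; split => //; exact: ltr01.
have ux := unitP _ Px. have uy := unitP _ Py.
have uC : C \is a GRing.unit by rewrite /C !unitrMl ?unitrV.
have hCx : reval x y cE = Some C by rewrite /cE /= ux uy.
have hC1 : reval (1 : CC^o) 1 cE = Some 1 by rewrite /cE /= unitr1 invr1 !mulr1.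
have hCdef : C = x * y / x / y by [].
clearbody C.
have fwd : forall n : int, P (R (n - 1)) -> P (R n) -> P (R (n + 1)).
  move=> n P1 P0; have u1 := unitP _ P1.
  case: P1 => [e1 [h1 [v1 [hv1 p1]]]]; case: P0 => [e [h [v [hv p]]]].
  have uv1 : v1 \is a GRing.unit by rewrite unitfE; apply: lt0r_neq0.
  exists (RMul (RMul (RAdd (RMul e e) (RC 1)) (RInv e1)) (RInv cE)); split.
    rewrite (rv_mul (rv_mul (rv_add (rv_mul h h) rv_one) (rv_inv h1 u1)) (rv_inv hCx uC)).
    by rewrite -expr2 -Hrec !mulrK.
  exists ((v * v + 1) / v1 / 1).
  rewrite (rv_mul (rv_mul (rv_add (rv_mul hv hv) rv_one) (rv_inv hv1 uv1)) (rv_inv hC1 (unitr1 CC^o))); split => //.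
  rewrite invr1 mulr1 divr_gt0 // addr_gt0 ?mulr_gt0 //; exact: ltr01.
have bwd : forall n : int, P (R n) -> P (R (n + 1)) -> P (R (n - 1)).
  move=> n P0 P2; have u2 := unitP _ P2.
  case: P2 => [e2 [h2 [v2 [hv2 p2]]]]; case: P0 => [e [h [v [hv p]]]].
  have uv2 : v2 \is a GRing.unit by rewrite unitfE; apply: lt0r_neq0.
  exists (RMul (RMul (RInv cE) (RInv e2)) (RAdd (RMul e e) (RC 1))); split.
    rewrite (rv_mul (rv_mul (rv_inv hCx uC) (rv_inv h2 u2)) (rv_add (rv_mul h h) rv_one)).
    by rewrite -expr2 -Hrec !mulrA divrK // mulVr // mul1r.
  exists (1^-1 / v2 * (v * v + 1)).
  rewrite (rv_mul (rv_mul (rv_inv hC1 (unitr1 CC^o)) (rv_inv hv2 uv2)) (rv_add (rv_mul hv hv) rv_one)); split => //.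
  rewrite invr1 mul1r mulr_gt0 ?invr_gt0 // addr_gt0 ?mulr_gt0 //; exact: ltr01.
have P0 : P (R 0).
  exists (RMul (RMul RY RX) (RInv RY)); split.
    by rewrite /= uy HR0.
  exists 1; rewrite /= unitr1 invr1 !mulr1; split => //; exact: ltr01.
have PR : forall n, P (R n) by apply: int_ind2 => //; rewrite HR1.
have uR : forall n, R n \is a GRing.unit by move=> n; apply: unitP.
have J : forall n, R (n + 1) * C * R n = R n * R (n + 1).
  apply: int_ind1.
  - by rewrite add0r HR0 HR1 hCdef !mulrA !divrK // mulrK.
  - move=> n hJ; have hr := Hrec (n + 1); rewrite addrK in hr.
    exact: (L_fwd _ _ _ _ _ (uR n) (uR (n+1)) uC hr hJ).
  - move=> n hJ; rewrite subrK.
    exact: (L_bwd _ _ _ _ _ (uR n) (uR (n+1)) uC (Hrec n) hJ).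
have Kstep : forall n, Kinv R (n + 1) = Kinv R n.
  move=> n; rewrite /Kinv; have hr := Hrec (n + 1); rewrite addrK in hr.
  exact: (L_K _ _ _ _ _ (uR n) (uR (n+1)) (uR (n+1+1)) uC hr (J n) (J (n+1))).
apply: int_ind1 => // n hn; first by rewrite Kstep.
by rewrite -hn -{2}(subrK 1 n) Kstep.
Qed.
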